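(* Let $\Delta$ be a foliation on a Hausdorff topological manifold $X$, let $Y$ be the space of leaves of $\Delta$ endowed with the quotient topology with respect to the natural projection $p:X\to Y$, and suppose that (a) $Y$ is a $T_1$-space, i.e. each leaf of $\Delta$ is a closed subset of $X$; (b) the set of branch points of $Y$ is locally finite in $Y$. Then the homomorphism $\psi:\mathcal{H}(X,\Delta)\to\mathcal{H}(Y)$ is continuous with respect to the compact open topologies on $\mathcal{H}(X,\Delta)$ and $\mathcal{H}(Y)$.
   Context: $p:X\to Y$ sends $x$ to the leaf containing $x$; a set $A\subset Y$ is open iff $p^{-1}(A)$ is open in $X$. $\mathcal{H}(X,\Delta)$ is the group of foliated homeomorphisms of $X$ (homeomorphisms $h$ such that $h$ maps each leaf onto a leaf), and $\mathcal{H}(Y)$ is the group of homeomorphisms of $Y$; both carry the compact open topology, generated by the subbasic sets $\{f : f(K)\subset U\}$ with $K$ compact and $U$ open. For $h\in\mathcal{H}(X,\Delta)$, $\psi(h):Y\to Y$ is the unique map with $p\circ h=\psi(h)\circ p$ (it is a homeomorphism of $Y$). Two points $y,z\in Y$ are $T_2$-disjoint if they have disjoint neighborhoods; $y\in Y$ is a branch point if there exists $z\neq y$ in $Y$ that is not $T_2$-disjoint from $y$. A subset $A\subset Y$ is locally finite if every point of $Y$ has a neighborhood $U$ with $U\cap A$ finite. *)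

(* Defs.v *)
From HB Require Import structures.
From mathcomp Require Import all_boot all_order all_algebra.
From mathcomp Require Import all_classical all_reals all_analysis.
Import numFieldNormedType.Exports.
Set Implicit Arguments. Unset Strict Implicit. Unset Printing Implicit Defensive.
Import Order.TTheory GRing.Theory Num.Theory.
Local Open Scope classical_set_scope.
Local Open Scope ring_scope.

Section defs.
Variable R : realType.

Definition path_in (X : topologicalType) (A : set X) (x y : X) :=
  exists f : R -> X, [/\ {within `[0, 1], continuous f}, f 0 = x, f 1 = y &
                         f @` `[0, 1] `<=` A].

Definition path_connected_set (X : topologicalType) (A : set X) :=
  forall x y, A x -> A y -> path_in A x y.

Definition path_component (X : topologicalType) (A : set X) (x : X) :=
  [set y | path_in A x y].

Definition is_path_component (X : topologicalType) (A C : set X) :=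
  exists2 x, A x & C = path_component A x.

Definition open_embedding_onto (S X : topologicalType) (phi : S -> X) (U : set X) :=
  [/\ injective phi, continuous phi, open U, range phi = U &
      forall A : set S, open A -> open (phi @` A)].

Definition topological_manifold (X : topologicalType) :=
  hausdorff_space X /\
  exists n : nat, forall x : X, exists (U : set X) (phi : 'rV[R]_n -> X),
      U x /\ open_embedding_onto phi U.

(** A foliated chart of [D] (leaves of dimension q, codimension p). *)
Definition foliated_chart (X : topologicalType) (D : set (set X)) (p q : nat)
    (U : set X) (phi : 'rV[R]_p * 'rV[R]_q -> X) :=
  open_embedding_onto phi U /\
  forall L, D L -> forall C, is_path_component (L `&` U) C ->
    exists v : 'rV[R]_p, C = phi @` [set (v, w) | w in [set: 'rV[R]_q]].

Definition foliation (X : topologicalType) (D : set (set X)) :=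
  [/\ forall L, D L -> L !=set0 /\ path_connected_set L,
      forall x : X, exists2 L, D L & L x,
      forall L M, D L -> D M -> L `&` M !=set0 -> L = M &
      exists p q : nat, forall x : X, exists U phi,
        U x /\ @foliated_chart X D p q U phi].
End defs.

(** The leaf of [D] containing [x] (well-defined when [D] is a partition). *)
Definition leaf_of (X : Type) (D : set (set X)) (x : X) : set X :=
  get [set L | D L /\ L x].

Section leafspace.
Context {X : topologicalType} (D : set (set X)).

Definition same_leaf : rel X := fun x y => `[< leaf_of D x = leaf_of D y >].

Lemma same_leaf_refl : reflexive same_leaf.
Proof. by move=> x; apply/asboolP. Qed.
Lemma same_leaf_sym : symmetric same_leaf.
Proof. by move=> x y; apply/asboolP/asboolP => ->. Qed.
Lemma same_leaf_trans : transitive same_leaf.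
Proof. by move=> y x z /asboolP h1 /asboolP h2; apply/asboolP; rewrite h1 h2. Qed.

Local Open Scope quotient_scope.
Definition same_leaf_equiv : equiv_rel X :=
  EquivRel same_leaf same_leaf_refl same_leaf_sym same_leaf_trans.

Definition leaf_space : topologicalType :=
  quotient_topology {eq_quot same_leaf_equiv}.

Definition leaf_proj : X -> leaf_space := \pi_leaf_space.

(** psi(h) : Y -> Y with p \o h = psi(h) \o p (for foliated h). *)
Definition leaf_map (h : X -> X) : leaf_space -> leaf_space :=
  fun y => leaf_proj (h (repr y)).
End leafspace.

Definition homeomorphism (T : topologicalType) (h : T -> T) :=
  exists g : T -> T, [/\ cancel h g, cancel g h, continuous h & continuous g].

Definition foliated_homeo (X : topologicalType) (D : set (set X)) (h : X -> X) :=
  homeomorphism h /\ forall L, D L -> D (h @` L).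

Definition T2_disjoint (Y : topologicalType) (y z : Y) :=
  exists U V : set Y, [/\ nbhs y U, nbhs z V & U `&` V = set0].

Definition branch_point (Y : topologicalType) (y : Y) :=
  exists z, z <> y /\ ~ T2_disjoint y z.

Definition locally_finite (Y : topologicalType) (A : set Y) :=
  forall y : Y, exists U : set Y, nbhs y U /\ finite_set (U `&` A).

Arguments leaf_map {X} D h _.
Arguments leaf_proj {X} D _.

(* Main.v *)
Require Import Defs.
From HB Require Import structures.
From mathcomp Require Import all_boot all_order all_algebra finmap.
From mathcomp Require Import all_classical all_reals all_analysis.
From mathcomp Require Import lra.
Import numFieldNormedType.Exports.
Import Order.TTheory GRing.Theory Num.Theory.
Local Open Scope classical_set_scope.
Set Implicit Arguments. Unset Strict Implicit. Unset Printing Implicit Defensive.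

Lemma path_in_refl (R : realType) (X : topologicalType) (A : set X) x :
  A x -> path_in R A x x.
Proof.
move=> Ax; exists (fun _ => x); split => //.
  by apply: continuous_subspaceT; exact: cst_continuous.
by move=> _ [t _ <-].
Qed.

Lemma path_in_sub (R : realType) (X : topologicalType) (A : set X) x y :
  path_in R A x y -> A y.
Proof.
case=> f [_ _ <- sub]; apply: sub; exists 1%R => //.
by rewrite /= in_itv /= lexx ler01.
Qed.

Section num.
Local Open Scope ring_scope.
Lemma itv01P (R : realType) (u : R) : `[0, 1]%classic u <-> (0 <= u <= 1)%R.
Proof. by rewrite /= in_itv. Qed.

Lemma lin_cont (R : realType) (t s : R) : continuous (fun u : R => t + u * (s - t))%R.
Proof.
move=> u.
apply: (@continuousD _ R^o R (fun _ => t) (fun u => u * (s - t)) u); first exact: cst_continuous.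
apply: (@continuousM R R (fun u => u) (fun _ => s - t)); [exact: cvg_id | exact: cst_continuous].
Qed.

Lemma lin01 (R : realType) (t s u : R) : `[0, 1]%classic t -> `[0, 1]%classic s -> `[0, 1]%classic u ->
  `[0, 1]%classic (t + u * (s - t))%R.
Proof.
move=> /itv01P/andP[? ?] /itv01P/andP[? ?] /itv01P/andP[? ?]; apply/itv01P.
apply/andP; split; nra.
Qed.

Lemma lin_ball (R : realType) (t s u e : R) : `[0, 1]%classic u -> ball t e s ->
  ball t e (t + u * (s - t))%R.
Proof.
move=> /itv01P/andP[? ?]; rewrite -!ball_normE /ball_ /= => h.
rewrite opprD addrA subrr sub0r normrN normrM (ger0_norm (x:=u)) //.
rewrite distrC in h; apply: le_lt_trans h; rewrite ler_piMl //.
Qed.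
End num.

Section boxes.
Local Open Scope ring_scope.
Lemma box_nbhs (R : realType) n (v : 'rV[R]_n) (r : R) : 0 < r ->
  nbhs v [set w : 'rV[R]_n | forall i, `[v ord0 i - r, v ord0 i + r]%classic (w ord0 i)].
Proof.
move=> r0; exists (fun i j => ball (v i j) r).
  by move=> i j; apply: nbhsx_ballx.
move=> w /= h i; have := h ord0 i; rewrite -ball_normE /ball_ /= in_itv /=.
rewrite ltr_distlC => /andP[a b]; apply/andP; split; exact: ltW.
Qed.

Lemma box_compact (R : realType) n (v : 'rV[R]_n) (r : R) :
  compact [set w : 'rV[R]_n | forall i, `[v ord0 i - r, v ord0 i + r]%classic (w ord0 i)].
Proof.
have := (@rV_compact R n (fun i => `[v ord0 i - r, v ord0 i + r]%classic)
  (fun i => @segment_compact R _ _)).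
exact.
Qed.

Lemma box_ball (R : realType) n (v : 'rV[R]_n) (e : R) : 0 < e ->
  [set w : 'rV[R]_n | forall i, `[v ord0 i - e / 2, v ord0 i + e / 2]%classic (w ord0 i)]
  `<=` ball v e.
Proof.
move=> e0 w h; split => // i j; rewrite -ball_normE /ball_ /= ord1.
have := h j; rewrite /= in_itv /= => /andP[a b].
rewrite ltr_distlC; apply/andP; split.
  by apply: lt_le_trans a; rewrite ltrD2l ltrN2 ltr_pdivrMr // ltr_pMr // ltr1n.
by apply: le_lt_trans b _; rewrite ltrD2l ltr_pdivrMr // ltr_pMr // ltr1n.
Qed.
End boxes.

Lemma manifold_lc (R : realType) (X : topologicalType) : topological_manifold R X ->
  forall (x : X) (V : set X), nbhs x V ->
  exists WB : set X * set X, [/\ open WB.1, WB.1 x, compact WB.2 & WB.1 `<=` WB.2 /\ WB.2 `<=` V].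
Proof.
case=> _ [n Hn] x V nV.
have [U [phi [Ux [inj cphi oU rU oemb]]]] := Hn x.
have [v _ vx] : range phi x by rewrite rU.
have : nbhs v (phi @^-1` V) by apply: cphi; rewrite vx.
move/nbhs_ballP => -[e e0 he].
set B0 := [set w : 'rV[R]_n | forall i, `[v ord0 i - e / 2, v ord0 i + e / 2]%classic (w ord0 i)]%R.
exists (phi @` B0°, phi @` B0); split => /=.
- exact: oemb _ (@open_interior _ B0).
- exists v => //; apply: box_nbhs; exact: divr_gt0.
- apply: continuous_compact; [exact: continuous_subspaceT | exact: box_compact].
- split; first by move=> _ [w /interior_subset Bw <-]; exists w.
  by move=> _ [w Bw <-]; apply: he; exact: box_ball.
Qed.

Section P.
Variables (T : topologicalType) (t0 : T).
Definition PT : Type := T.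
HB.instance Definition _ := Topological.on PT.
HB.instance Definition _ := isPointed.Build PT t0.
Lemma compact_coverT (A : set T) : compact A -> cover_compact A.
Proof. move=> cA. have E := @compact_cover PT.
have : @compact PT A by [].
rewrite E. exact.
Qed.
End P.

Lemma compact_coverT' (T : topologicalType) (A : set T) : compact A -> cover_compact A.
Proof.
move=> cA; have [[t0 _]|A0] := pselect (A !=set0); first exact: (@compact_coverT T t0 A cA).
move=> I D f _ _; exists fset0%fset => //; move=> x Ax; exfalso; apply: A0; by exists x.
Qed.

Lemma openXT (T U : topologicalType) (A : set T) : open A -> open (A `*` [set: U]).
Proof.
move=> oA; rewrite openE => -[x y] [/= Ax _].
exists (A, setT) => /=; first by split => //; [exact: open_nbhs_nbhs | exact: filterT].
by move=> [a b] [/= ? ?].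
Qed.

Section leaves.
Variables (R : realType) (X : topologicalType) (D : set (set X)).
Hypothesis Hf : foliation R D.

Lemma leaf_ofP x : D (leaf_of D x) /\ leaf_of D x x.
Proof.
case: Hf => _ Hex _ _.
have [L DL Lx] := Hex x.
by have := @getPex _ [set L | D L /\ L x] (ex_intro _ L (conj DL Lx)).
Qed.

Lemma leaf_uniq L x : D L -> L x -> leaf_of D x = L.
Proof.
move=> DL Lx; case: Hf => _ _ Huniq _.
have [DL' Lx'] := leaf_ofP x.
by apply: Huniq => //; exists x.
Qed.

Lemma projE x y : leaf_proj D x = leaf_proj D y <-> leaf_of D x = leaf_of D y.
Proof.
rewrite /leaf_proj; split.
  by move/eqquotP => /asboolP.
by move=> h; apply/eqquotP; apply/asboolP.
Qed.

Lemma proj_open_pre (O : set (leaf_space D)) : open O -> open (leaf_proj D @^-1` O).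
Proof. by []. Qed.

Lemma leaf_map_proj (h : X -> X) x : (forall L, D L -> D (h @` L)) ->
  leaf_map D h (leaf_proj D x) = leaf_proj D (h x).
Proof.
move=> hD; rewrite /leaf_map; apply/projE.
set r := repr _.
have : leaf_of D r = leaf_of D x by apply/projE; rewrite /r /leaf_proj reprK.
have [DL Lx] := leaf_ofP x; have [_ Lr] := leaf_ofP r => E.
rewrite E in Lr.
rewrite (leaf_uniq (hD _ DL) (imageP h Lr)).
by rewrite (leaf_uniq (hD _ DL) (imageP h Lx)).
Qed.

Lemma plaque_leaf p q U (phi : 'rV[R]_p * 'rV[R]_q -> X) a w w' :
  foliated_chart D U phi ->
  leaf_of D (phi (a, w')) = leaf_of D (phi (a, w)).
Proof.
case=> -[inj _ _ rU _] Hc.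
set M := leaf_of D (phi (a, w)).
have [DM Mx] := leaf_ofP (phi (a, w)).
have MUx : (M `&` U) (phi (a, w)) by split => //; rewrite -rU; exists (a, w).
have [v Cv] := Hc M DM (path_component R (M `&` U) (phi (a, w)))
   (ex_intro2 _ _ _ MUx erefl).
have : path_component R (M `&` U) (phi (a, w)) (phi (a, w)).
  exact: path_in_refl.
rewrite Cv => -[z [w1 _ <-]] /inj [va _].
have : path_component R (M `&` U) (phi (a, w)) (phi (a, w')).
  by rewrite Cv; apply: imageP; exists w'; rewrite // va.
by move/path_in_sub => [Mw' _]; apply: leaf_uniq.
Qed.

Lemma plaque_interior p q U (phi : 'rV[R]_p * 'rV[R]_q -> X) (S : set X) a w1 w2 :
  foliated_chart D U phi ->
  (forall x y, S x -> leaf_of D y = leaf_of D x -> S y) ->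
  S° (phi (a, w1)) -> S° (phi (a, w2)).
Proof.
move=> ch; case: (ch) => -[inj cphi oU rU oemb] Hc Ssat nS.
have := cphi (a, w1) S nS.
case => -[A B] /= [nA nB] sAB.
set O := phi @` (A° `*` setT).
have oO : open O by apply: oemb; apply: openXT; exact: open_interior.
apply: (@filterS _ _ _ O).
  move=> _ [[a' w] [/= Aa' _] <-]; apply: (Ssat (phi (a', w1))).
    apply: (sAB (a', w1)); split => /=; [exact: interior_subset | exact: nbhs_singleton].
  exact: (@plaque_leaf p q U phi a' w1 w ch).
apply: open_nbhs_nbhs; split => //; exists (a, w2) => //.
Qed.

Lemma interior_leaf (S : set X) x y :
  (forall x y, S x -> leaf_of D y = leaf_of D x -> S y) ->
  S° y -> leaf_of D x = leaf_of D y -> S° x.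
Proof.
move=> Ssat Sy Exy.
have [DL Ly] := leaf_ofP y.
have Lx : leaf_of D y x by rewrite -Exy; case: (leaf_ofP x).
case: (Hf) => Hpc _ _ [p [q Hch]].
have [_ pcL] := Hpc _ DL.
have [f [cf f0 f1 fsub]] := pcL y x Ly Lx.
move/subspace_continuousP: cf => cf.
set T := fun t => S° (f t).
have loc : forall t : R, `[0%R, 1%R] t -> \forall s \near t, `[0%R, 1%R] s -> (T s <-> T t).
  move=> t t01.
  have Lft : leaf_of D y (f t) by apply: fsub; exists t.
  have [U [phi [Uft ch]]] := Hch (f t).
  case: (ch) => -[inj cphi oU rU oemb] Hc.
  have := cf t t01 U (open_nbhs_nbhs (conj oU Uft)).
  move/nbhs_ballP => -[e e0 he].
  apply/nbhs_ballP; exists e => // s bs s01.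
  have pts : path_component R (leaf_of D y `&` U) (f t) (f s).
    exists (fun u => f (t + u * (s - t))%R); split.
    - apply/subspace_continuousP => u u01 N nN.
      have h1 := cf _ (lin01 t01 s01 u01) N nN.
      have h2 := @lin_cont R t s u _ h1.
      suff H : nbhs u (fun u' : R => `[0%R, 1%R] u' -> N (f (t + u' * (s - t))%R)) by [].
      have h3 : nbhs u (fun u' : R => `[0%R, 1%R] (t + u' * (s - t))%R -> N (f (t + u' * (s - t))%R)) := h2.
      apply: filterS h3 => u' h u'01; exact: h (lin01 t01 s01 u'01).
    - by rewrite GRing.mul0r GRing.addr0.
    - by rewrite GRing.mul1r GRing.addrC GRing.subrK.
    - move=> _ [u u01 <-]; split.
        by apply: fsub; exists (t + u * (s - t))%R => //; exact: lin01.
      exact: (he _ (lin_ball u01 bs) (lin01 t01 s01 u01)).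
  have [v Cv] := Hc _ DL _ (ex_intro2 _ _ (f t) (conj Lft Uft) erefl).
  have : path_component R (leaf_of D y `&` U) (f t) (f t) := @path_in_refl R X (leaf_of D y `&` U) (f t) (conj Lft Uft).
  rewrite Cv => -[_ [w1 _ <-] E1].
  move: pts; rewrite Cv => -[_ [w2 _ <-] E2].
  rewrite /T -E1 -E2; split => h.
    exact: (@plaque_interior p q U phi S v w2 w1 ch Ssat h).
  exact: (@plaque_interior p q U phi S v w1 w2 ch Ssat h).
have I1 : `[0%R, 1%R] (1%R : R) by apply/itv01P; rewrite lexx ler01.
have I0 : `[0%R, 1%R] (0%R : R) by apply/itv01P; rewrite lexx ler01.
have B1 : (`[0%R, 1%R] `&` T) = `[0%R, 1%R].
  apply: (@segment_connected R 0 1).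
  - by exists 0%R; split => //; rewrite /T f0.
  - exists (interior [set s | `[0%R, 1%R] s -> T s]); first exact: open_interior.
    apply/seteqP; split => s.
      case=> s01 Ts; split => //; move: (loc s s01); apply: filterS => r h r01.
      by apply/(h r01).
    by case=> s01 /interior_subset h; split => //; exact: h.
  - exists (~` interior [set s | `[0%R, 1%R] s -> ~ T s]).
      by apply: open_closedC; exact: open_interior.
    apply/seteqP; split => s.
      by case=> s01 Ts; split => // /interior_subset h; exact: h s01 Ts.
    case=> s01 nI; split => //; apply: contrapT => nTs; apply: nI.
    have := loc s s01; apply: filterS => r h r01 Tr; apply: nTs.
    by apply/(h r01).
have : (`[0%R, 1%R] `&` T) 1%R by rewrite B1.
by case=> _; rewrite /T f1.
Qed.

Lemma proj_open W : open W -> open (leaf_proj D @` W : set (leaf_space D)).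
Proof.
move=> oW.
set S := leaf_proj D @^-1` (leaf_proj D @` W).
have Ssat : forall x y, S x -> leaf_of D y = leaf_of D x -> S y.
  move=> x y [w Ww Ewx] E; exists w => //; rewrite Ewx; apply/projE; by rewrite E.
have : open S.
  rewrite openE => x [w Ww /projE Ewx].
  apply: (@interior_leaf S x w Ssat); last by rewrite Ewx.
  have : nbhs w W by apply: open_nbhs_nbhs.
  by apply: filterS => z Wz; exists z.
exact.
Qed.

Lemma compact_lift (Hm : topological_manifold R X) (K : set (leaf_space D)) (V : set X) :
  compact K -> open V -> K `<=` leaf_proj D @` V ->
  exists C : set X, [/\ compact C, C `<=` V & K `<=` leaf_proj D @` C].
Proof.
move=> cK oV KV.
have [g hg] : {g : X -> set X * set X & forall x,
  V x -> [/\ open (g x).1, (g x).1 x, compact (g x).2 & (g x).1 `<=` (g x).2 /\ (g x).2 `<=` V]}.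
  apply: (@choice X (set X * set X) (fun (x : X) (WB : set X * set X) =>
    V x -> [/\ open WB.1, WB.1 x, compact WB.2 & WB.1 `<=` WB.2 /\ WB.2 `<=` V])).
  move=> x; have [Vx|nVx] := pselect (V x).
    have [WB h] := manifold_lc Hm (open_nbhs_nbhs (conj oV Vx)); by exists WB.
  by exists (set0, set0).
have [F FV KF] : finite_subset_cover V (fun i : X => leaf_proj D @` (g i).1) K.
  apply: (@compact_coverT' _ _ cK X V).
  - move=> i Vi; apply: proj_open; by case: (hg i Vi).
  - move=> y /KV [x Vx <-]; exists x => //; exists x => //; by case: (hg x Vx).
exists (\bigcup_(i in [set` F]) (g i).2); split.
- rewrite bigcup_fset big_seq; apply: bigsetU_compact => i Fi.
  by case: (hg i (set_mem (FV _ Fi))).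
- move=> x [i Fi gx]; have Vi := set_mem (FV _ Fi).
  by case: (hg i Vi) => _ _ _ [_]; apply.
- move=> y /KF [i Fi [x gx <-]]; exists x => //; exists i => //.
  by case: (hg i (set_mem (FV _ Fi))) => _ _ _ [+ _]; apply.
Qed.

End leaves.

Unset Implicit Arguments.
Set Strict Implicit.

Theorem theorem1p1 (R : realType) (X : topologicalType) (D : set (set X)) :
  topological_manifold R X ->
  foliation R D ->
  (forall L : set X, D L -> closed L) ->
  locally_finite [set y : leaf_space D | branch_point y] ->
  {within [set h : {compact-open, X -> X} | foliated_homeo D h],
    continuous (leaf_map D : {compact-open, X -> X} ->
                             {compact-open, leaf_space D -> leaf_space D})}.
Proof.
move=> Hm Hf _ _.
apply/subspace_continuousP => h [[hi [_ _ ch _]] hD].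
apply/compact_open_cvgP => K O cK oO hKO.
set V := h @^-1` (leaf_proj D @^-1` O).
have oV : open V.
  move/continuousP: ch; apply; exact: proj_open_pre.
have KV : K `<=` leaf_proj D @` V.
  move=> y Ky; exists (repr y); last by rewrite /leaf_proj reprK.
  rewrite /V /= -(leaf_map_proj Hf _ hD) /leaf_proj reprK; apply: hKO; by exists y.
have [C [cC CV KC]] := compact_lift Hf Hm cK oV KV.
set N := [set g : {compact-open, X -> X} | g @` C `<=` leaf_proj D @^-1` O].
have oN : open N.
  apply: compact_open_open => //; exact: proj_open_pre.
have Nh : N h by move=> _ [x Cx <-]; exact: CV.
have nN : nbhs h N by apply: open_nbhs_nbhs.
suff H : nbhs h (fun g : {compact-open, X -> X} => foliated_homeo D g ->
   leaf_map D g @` K `<=` O) by [].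
apply: filterS nN => g Ng [_ gD] _ [y /KC [x Cx <-] <-].
rewrite (leaf_map_proj Hf _ gD); apply: Ng; by exists x.
Qed.
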